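(* For the modular data of the quantum double of $S_3$, each of the trace six modular invariants $Z_{(22)},Z_2,Z_4,Z_7,Z_{22},Z_{33},Z_{(33)}$ has, up to equivalence, exactly one matching nimrep.
   Context: Primaries $0,\dots,7$, all self-conjugate, with $S=\frac16\begin{pmatrix}1&1&2&2&2&2&3&3\\1&1&2&2&2&2&-3&-3\\2&2&4&-2&-2&-2&0&0\\2&2&-2&4&-2&-2&0&0\\2&2&-2&-2&-2&4&0&0\\2&2&-2&-2&4&-2&0&0\\3&-3&0&0&0&0&3&-3\\3&-3&0&0&0&0&-3&3\end{pmatrix}$, fusion coefficients $N_{\lambda\mu}^\nu=\sum_\rho S_{\lambda\rho}S_{\mu\rho}\overline{S_{\nu\rho}}/S_{0\rho}$. Matrices are written as $\sum Z_{\lambda\mu}\chi_\lambda\chi_\mu^*$, and $st^*$ for linear forms is the matrix of products of coefficients. $Z_2$ = permutation matrix of the transposition $2\leftrightarrow3$ on $\{0,\dots,7\}$. $Z_4=|\chi_0+\chi_1+\chi_2+\chi_3|^2-(\chi_2\chi_3^*+\chi_3\chi_2^*-|\chi_2|^2-|\chi_3|^2)$. $Z_7=|\chi_0+\chi_1|^2+2|\chi_4|^2+2|\chi_5|^2+2\chi_2\chi_3^*+2\chi_3\chi_2^*$. With $s_2=\chi_0+\chi_1+2\chi_2$, $s_3=\chi_0+\chi_1+2\chi_3$: $Z_{22}=s_2s_2^*$, $Z_{33}=s_3s_3^*$. $Z_{(22)}=|\chi_0+\chi_2|^2+|\chi_1+\chi_2|^2+|\chi_6|^2+|\chi_7|^2$,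 $Z_{(33)}=|\chi_0+\chi_3|^2+|\chi_1+\chi_3|^2+|\chi_6|^2+|\chi_7|^2$. A nimrep of dimension $n$: non-negative integer $n\times n$ matrices $G_\lambda$ with $G_0=I$, $G_{\bar\lambda}=G_\lambda^t$, $G_\lambda G_\mu=\sum_\nu N_{\lambda\mu}^\nu G_\nu$; nimreps are equivalent if conjugate by a common permutation matrix. $\mathrm{Exp}(Z)$ is the multiset with $Z_{\mu\mu}$ copies of $\mu$. A nimrep matches $Z$ if $n=\mathrm{Tr}\,Z$ and the $G_\lambda$ are simultaneously unitarily diagonalisable with joint eigenvalues $(S_{\lambda\mu}/S_{0\mu})_\lambda$, $\mu$ running through $\mathrm{Exp}(Z)$ with multiplicity. *)

(* Defs.v *)
From HB Require Import structures.
From mathcomp Require Import all_boot all_order all_fingroup all_algebra all_field.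
Set Implicit Arguments. Unset Strict Implicit. Unset Printing Implicit Defensive.
Import Order.TTheory GRing.Theory Num.Theory.
Local Open Scope ring_scope.

Definition mxl {R : Type} (d : R) (l : seq (seq R)) : 'M[R]_8 :=
  \matrix_(i < 8, j < 8) nth d (nth [::] l i) j.

Definition S6 : 'M[int]_8 := mxl 0
  [:: [:: 1; 1; 2; 2; 2; 2; 3; 3];
      [:: 1; 1; 2; 2; 2; 2; -3; -3];
      [:: 2; 2; 4; -2; -2; -2; 0; 0];
      [:: 2; 2; -2; 4; -2; -2; 0; 0];
      [:: 2; 2; -2; -2; -2; 4; 0; 0];
      [:: 2; 2; -2; -2; 4; -2; 0; 0];
      [:: 3; -3; 0; 0; 0; 0; 3; -3];
      [:: 3; -3; 0; 0; 0; 0; -3; 3]].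

Definition Smat : 'M[algC]_8 := \matrix_(i, j) ((S6 i j)%:~R / 6%:R).

Definition conjp (l : 'I_8) : 'I_8 := l.

Definition fusion (l m n : 'I_8) : algC :=
  \sum_(r < 8) Smat l r * Smat m r * (Smat n r)^* / Smat ord0 r.

Definition natmx n (A : 'M[nat]_n) : 'M[algC]_n := map_mx (fun k => k%:R) A.

Definition is_nimrep n (G : 'I_8 -> 'M[nat]_n) : Prop :=
  [/\ G ord0 = 1%:M,
      forall l, G (conjp l) = (G l)^T
    & forall l m, natmx (G l *m G m) = \sum_(v < 8) fusion l m v *: natmx (G v)].

Definition nimrep_equiv n (G1 G2 : 'I_8 -> 'M[nat]_n) : Prop :=
  exists s : 'S_n, forall l, G2 l = perm_mx s *m G1 l *m (perm_mx s)^T.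

Definition ctrans n (U : 'M[algC]_n) : 'M[algC]_n := (map_mx Num.conj_op U)^T.

Definition matches (Z : 'M[nat]_8) n (G : 'I_8 -> 'M[nat]_n) : Prop :=
  [/\ n = \tr Z, is_nimrep G &
      exists (U : 'M[algC]_n) (e : 'I_n -> 'I_8),
        [/\ U *m ctrans U = 1%:M,
            (* e enumerates Exp(Z) with multiplicity *)
            forall mu, #|[set i | e i == mu]| = Z mu mu
          & forall l, natmx (G l) =
              ctrans U *m diag_mx (\row_i (Smat l (e i) / Smat ord0 (e i))) *m U]].

(* Z_(22) = |x0+x2|^2+|x1+x2|^2+|x6|^2+|x7|^2 *)
Definition Zp22 : 'M[nat]_8 := mxl 0%N
  [:: [:: 1; 0; 1; 0; 0; 0; 0; 0];
      [:: 0; 1; 1; 0; 0; 0; 0; 0];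
      [:: 1; 1; 2; 0; 0; 0; 0; 0];
      [:: 0; 0; 0; 0; 0; 0; 0; 0];
      [:: 0; 0; 0; 0; 0; 0; 0; 0];
      [:: 0; 0; 0; 0; 0; 0; 0; 0];
      [:: 0; 0; 0; 0; 0; 0; 1; 0];
      [:: 0; 0; 0; 0; 0; 0; 0; 1]]%N.
(* Z_(33) = |x0+x3|^2+|x1+x3|^2+|x6|^2+|x7|^2 *)
Definition Zp33 : 'M[nat]_8 := mxl 0%N
  [:: [:: 1; 0; 0; 1; 0; 0; 0; 0];
      [:: 0; 1; 0; 1; 0; 0; 0; 0];
      [:: 0; 0; 0; 0; 0; 0; 0; 0];
      [:: 1; 1; 0; 2; 0; 0; 0; 0];
      [:: 0; 0; 0; 0; 0; 0; 0; 0];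
      [:: 0; 0; 0; 0; 0; 0; 0; 0];
      [:: 0; 0; 0; 0; 0; 0; 1; 0];
      [:: 0; 0; 0; 0; 0; 0; 0; 1]]%N.
(* Z_2 = permutation matrix of the transposition 2 <-> 3 *)
Definition Z2 : 'M[nat]_8 := mxl 0%N
  [:: [:: 1; 0; 0; 0; 0; 0; 0; 0];
      [:: 0; 1; 0; 0; 0; 0; 0; 0];
      [:: 0; 0; 0; 1; 0; 0; 0; 0];
      [:: 0; 0; 1; 0; 0; 0; 0; 0];
      [:: 0; 0; 0; 0; 1; 0; 0; 0];
      [:: 0; 0; 0; 0; 0; 1; 0; 0];
      [:: 0; 0; 0; 0; 0; 0; 1; 0];
      [:: 0; 0; 0; 0; 0; 0; 0; 1]]%N.
(* Z_4 = |x0+x1+x2+x3|^2 - (x2 x3^* + x3 x2^* - |x2|^2 - |x3|^2) *)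
Definition Z4 : 'M[nat]_8 := mxl 0%N
  [:: [:: 1; 1; 1; 1; 0; 0; 0; 0];
      [:: 1; 1; 1; 1; 0; 0; 0; 0];
      [:: 1; 1; 2; 0; 0; 0; 0; 0];
      [:: 1; 1; 0; 2; 0; 0; 0; 0];
      [:: 0; 0; 0; 0; 0; 0; 0; 0];
      [:: 0; 0; 0; 0; 0; 0; 0; 0];
      [:: 0; 0; 0; 0; 0; 0; 0; 0];
      [:: 0; 0; 0; 0; 0; 0; 0; 0]]%N.
(* Z_7 = |x0+x1|^2 + 2|x4|^2 + 2|x5|^2 + 2 x2 x3^* + 2 x3 x2^* *)
Definition Z7 : 'M[nat]_8 := mxl 0%N
  [:: [:: 1; 1; 0; 0; 0; 0; 0; 0];
      [:: 1; 1; 0; 0; 0; 0; 0; 0];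
      [:: 0; 0; 0; 2; 0; 0; 0; 0];
      [:: 0; 0; 2; 0; 0; 0; 0; 0];
      [:: 0; 0; 0; 0; 2; 0; 0; 0];
      [:: 0; 0; 0; 0; 0; 2; 0; 0];
      [:: 0; 0; 0; 0; 0; 0; 0; 0];
      [:: 0; 0; 0; 0; 0; 0; 0; 0]]%N.
(* Z_22 = s2 s2^*, s2 = x0 + x1 + 2 x2 *)
Definition Z22 : 'M[nat]_8 := mxl 0%N
  [:: [:: 1; 1; 2; 0; 0; 0; 0; 0];
      [:: 1; 1; 2; 0; 0; 0; 0; 0];
      [:: 2; 2; 4; 0; 0; 0; 0; 0];
      [:: 0; 0; 0; 0; 0; 0; 0; 0];
      [:: 0; 0; 0; 0; 0; 0; 0; 0];
      [:: 0; 0; 0; 0; 0; 0; 0; 0];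
      [:: 0; 0; 0; 0; 0; 0; 0; 0];
      [:: 0; 0; 0; 0; 0; 0; 0; 0]]%N.
(* Z_33 = s3 s3^*, s3 = x0 + x1 + 2 x3 *)
Definition Z33 : 'M[nat]_8 := mxl 0%N
  [:: [:: 1; 1; 0; 2; 0; 0; 0; 0];
      [:: 1; 1; 0; 2; 0; 0; 0; 0];
      [:: 0; 0; 0; 0; 0; 0; 0; 0];
      [:: 2; 2; 0; 4; 0; 0; 0; 0];
      [:: 0; 0; 0; 0; 0; 0; 0; 0];
      [:: 0; 0; 0; 0; 0; 0; 0; 0];
      [:: 0; 0; 0; 0; 0; 0; 0; 0];
      [:: 0; 0; 0; 0; 0; 0; 0; 0]]%N.

(* Main.v *)
From HB Require Import structures.
From mathcomp Require Import all_boot all_order all_fingroup all_algebra all_field.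
Require Import Defs.
From mathcomp Require Import ring.
Set Implicit Arguments. Unset Strict Implicit. Unset Printing Implicit Defensive.
Import Order.TTheory GRing.Theory Num.Theory.
Definition mget (M : seq (seq nat)) i j := nth 0 (nth [::] M i) j.
Definition mkL (f : nat -> nat -> nat) : seq (seq nat) :=
  [seq [seq f i j | j <- iota 0 6] | i <- iota 0 6].
Definition sumsq (s : seq nat) := sumn [seq x * x | x <- s].
Definition dot (u v : seq nat) := sumn [seq nth 0 u k * nth 0 v k | k <- iota 0 6].
Definition lmul A B := mkL (fun i j => sumn [seq mget A i k * mget B k j | k <- iota 0 6]).
Definition lsub A B := mkL (fun i j => mget A i j - mget B i j).
Definition ladd4 A B C D := mkL (fun i j => mget A i j + mget B i j + mget C i j + mget D i j).
Definition idL := mkL (fun i j => nat_of_bool (i == j)).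
Definition ltr M := sumn [seq mget M i i | i <- iota 0 6].
Definition leqM A B := all (fun i => all (fun j => mget A i j <= mget B i j) (iota 0 6)) (iota 0 6).

Fixpoint vecs (L s : nat) : seq (seq nat) :=
  match L with
  | 0 => if s == 0 then [:: [::]] else [::]
  | L'.+1 => flatten [seq [seq x :: w | w <- vecs L' (s - x * x)] | x <- iota 0 s.+1 & x * x <= s]
  end.

Definition rowcands (target : nat -> nat -> nat -> nat) (K : nat) (rows : seq (seq nat)) :=
  let i := size rows in
  let pre := [seq nth 0 r i | r <- rows] in
  [seq r <- flatten [seq (if sumsq pre + d * d <= target i i d then
                          [seq pre ++ d :: w | w <- vecs (5 - i) (target i i d - (sumsq pre + d * d))]
                          else [::]) | d <- iota 0 K.+1]
     | all (fun j => dot (nth [::] rows j) r == target j i (nth 0 r j)) (iota 0 i)].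

Fixpoint gen target K k : seq (seq (seq nat)) :=
  match k with
  | 0 => [:: [::]]
  | k'.+1 => flatten [seq [seq rcons rows r | r <- rowcands target K rows] | rows <- gen target K k']
  end.

Definition gensym target K := gen target K 6.

Definition tA := fun (i k : nat) (_ : nat) => nat_of_bool (i == k).
Definition tB (A : seq (seq nat)) := fun (i k b : nat) => nat_of_bool (i == k) + mget A i k + b.
Definition tH (X : seq (seq nat)) := fun (i k : nat) (_ : nat) => nat_of_bool (i == k) + mget X i k.

Definition conjL (p : seq nat) M := mkL (fun i j => mget M (nth 0 p i) (nth 0 p j)).
Fixpoint lall {T : Type} (a : T -> bool) (s : seq T) : bool :=
  match s with [::] => true | x :: s' => if a x then lall a s' else false end.
Fixpoint lhas {T : Type} (a : T -> bool) (s : seq T) : bool :=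
  match s with [::] => false | x :: s' => if a x then true else lhas a s' end.
Fixpoint lall2 {T : Type} (r : T -> T -> bool) (s t : seq T) : bool :=
  match s, t with
  | [::], [::] => true
  | x :: s', y :: t' => if r x y then lall2 r s' t' else false
  | _, _ => false end.
Definition eqconj (p : seq nat) g g0 :=
  lall (fun i => lall (fun j => mget g i j == mget g0 (nth 0 p i) (nth 0 p j)) (iota 0 6)) (iota 0 6).
Definition in_orbit (G0 Gs : seq (seq (seq nat))) :=
  lhas (fun p => lall2 (eqconj p) (rev Gs) (rev G0)) (permutations (iota 0 6)).

Definition search (T : seq nat) (G0 : seq (seq (seq nat))) : bool :=
  all (fun A => if ltr A == nth 0 T 1 then
   let Bs l := [seq B <- gensym (tB A) 2 | (ltr B == nth 0 T l) && (lmul A B == B)] in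
   let B2 := Bs 2 in let B3 := Bs 3 in let B4 := Bs 4 in
   all (fun B => all (fun C => let BC := lmul B C in if BC == lmul C B then
     all (fun D => if leqM D BC then
       let E := lsub BC D in
       if ltr E == nth 0 T 5 then
       if lmul E E == ladd4 idL A E (mkL (fun _ _ => 0)) then
       if lmul B D == ladd4 C E (mkL (fun _ _ => 0)) (mkL (fun _ _ => 0)) then
       all (fun H => if ltr H == nth 0 T 6 then
          in_orbit G0 [:: idL; A; B; C; D; E; H; lmul A H] else true)
        (gensym (tH (ladd4 B C D E)) 0) else true else true else true else true) B4 else true) B3) B2 else true)
  (gensym tA 1).
Definition NL : seq (seq (seq nat)) := [:: [:: [:: 1; 0; 0; 0; 0; 0; 0; 0]; [:: 0; 1; 0; 0; 0; 0; 0; 0]; [:: 0; 0; 1; 0; 0; 0; 0; 0]; [:: 0; 0; 0; 1; 0; 0; 0; 0]; [:: 0; 0; 0; 0; 1; 0; 0; 0]; [:: 0; 0; 0; 0; 0; 1; 0; 0]; [:: 0; 0; 0; 0; 0; 0; 1; 0]; [:: 0; 0; 0; 0; 0; 0; 0; 1]]; [:: [:: 0; 1; 0; 0; 0; 0; 0; 0]; [:: 1; 0; 0; 0; 0; 0; 0; 0]; [:: 0; 0; 1; 0; 0; 0; 0; 0]; [:: 0; 0; 0; 1; 0; 0; 0; 0]; [:: 0; 0; 0; 0; 1; 0; 0; 0]; [:: 0; 0; 0; 0; 0; 1; 0; 0]; [:: 0; 0; 0; 0; 0; 0; 0; 1]; [:: 0; 0; 0; 0; 0; 0; 1; 0]];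 [:: [:: 0; 0; 1; 0; 0; 0; 0; 0]; [:: 0; 0; 1; 0; 0; 0; 0; 0]; [:: 1; 1; 1; 0; 0; 0; 0; 0]; [:: 0; 0; 0; 0; 1; 1; 0; 0]; [:: 0; 0; 0; 1; 0; 1; 0; 0]; [:: 0; 0; 0; 1; 1; 0; 0; 0]; [:: 0; 0; 0; 0; 0; 0; 1; 1]; [:: 0; 0; 0; 0; 0; 0; 1; 1]]; [:: [:: 0; 0; 0; 1; 0; 0; 0; 0]; [:: 0; 0; 0; 1; 0; 0; 0; 0]; [:: 0; 0; 0; 0; 1; 1; 0; 0]; [:: 1; 1; 0; 1; 0; 0; 0; 0]; [:: 0; 0; 1; 0; 0; 1; 0; 0]; [:: 0; 0; 1; 0; 1; 0; 0; 0]; [:: 0; 0; 0; 0; 0; 0; 1; 1]; [:: 0; 0; 0; 0; 0; 0; 1; 1]]; [:: [:: 0; 0; 0; 0; 1; 0; 0; 0]; [:: 0; 0; 0; 0; 1; 0; 0; 0]; [:: 0; 0; 0; 1; 0; 1; 0; 0]; [:: 0; 0; 1; 0; 0; 1; 0; 0]; [:: 1; 1; 0; 0; 1; 0; 0; 0]; [:: 0; 0; 1; 1; 0; 0; 0; 0]; [:: 0; 0; 0; 0; 0; 0; 1; 1]; [:: 0; 0; 0; 0; 0; 0; 1; 1]]; [:: [:: 0; 0; 0; 0; 0; 1; 0; 0]; [:: 0; 0; 0; 0; 0; 1; 0; 0]; [:: 0; 0; 0; 1; 1; 0; 0; 0]; [:: 0; 0; 1; 0; 1; 0; 0; 0]; [::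 0; 0; 1; 1; 0; 0; 0; 0]; [:: 1; 1; 0; 0; 0; 1; 0; 0]; [:: 0; 0; 0; 0; 0; 0; 1; 1]; [:: 0; 0; 0; 0; 0; 0; 1; 1]]; [:: [:: 0; 0; 0; 0; 0; 0; 1; 0]; [:: 0; 0; 0; 0; 0; 0; 0; 1]; [:: 0; 0; 0; 0; 0; 0; 1; 1]; [:: 0; 0; 0; 0; 0; 0; 1; 1]; [:: 0; 0; 0; 0; 0; 0; 1; 1]; [:: 0; 0; 0; 0; 0; 0; 1; 1]; [:: 1; 0; 1; 1; 1; 1; 0; 0]; [:: 0; 1; 1; 1; 1; 1; 0; 0]]; [:: [:: 0; 0; 0; 0; 0; 0; 0; 1]; [:: 0; 0; 0; 0; 0; 0; 1; 0]; [:: 0; 0; 0; 0; 0; 0; 1; 1]; [:: 0; 0; 0; 0; 0; 0; 1; 1]; [:: 0; 0; 0; 0; 0; 0; 1; 1]; [:: 0; 0; 0; 0; 0; 0; 1; 1]; [:: 0; 1; 1; 1; 1; 1; 0; 0]; [:: 1; 0; 1; 1; 1; 1; 0; 0]]].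
Definition G_p22 : seq (seq (seq nat)) := [:: [:: [:: 1; 0; 0; 0; 0; 0]; [:: 0; 1; 0; 0; 0; 0]; [:: 0; 0; 1; 0; 0; 0]; [:: 0; 0; 0; 1; 0; 0]; [:: 0; 0; 0; 0; 1; 0]; [:: 0; 0; 0; 0; 0; 1]]; [:: [:: 0; 0; 0; 0; 0; 1]; [:: 0; 0; 0; 0; 1; 0]; [:: 0; 0; 1; 0; 0; 0]; [:: 0; 0; 0; 1; 0; 0]; [:: 0; 1; 0; 0; 0; 0]; [:: 1; 0; 0; 0; 0; 0]]; [:: [:: 1; 0; 0; 0; 0; 1]; [:: 0; 1; 0; 0; 1; 0]; [:: 0; 0; 2; 0; 0; 0]; [:: 0; 0; 0; 2; 0; 0]; [:: 0; 1; 0; 0; 1; 0]; [:: 1; 0; 0; 0; 0; 1]]; [:: [:: 0; 0; 0; 1; 0; 0]; [:: 0; 0; 1; 0; 0; 0]; [:: 0; 1; 1; 0; 1; 0]; [:: 1; 0; 0; 1; 0; 1]; [:: 0; 0; 1; 0; 0; 0]; [:: 0; 0; 0; 1; 0; 0]]; [:: [:: 0; 0; 0; 1; 0; 0]; [:: 0; 0; 1; 0; 0; 0]; [:: 0; 1; 1; 0; 1; 0]; [:: 1; 0; 0; 1; 0; 1]; [:: 0; 0; 1; 0; 0; 0]; [:: 0; 0; 0; 1; 0; 0]]; [:: [:: 0; 0; 0; 1; 0; 0]; [:: 0; 0; 1; 0; 0; 0]; [:: 0; 1; 1; 0; 1; 0]; [:: 1; 0; 0; 1; 0; 1]; [:: 0;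 0; 1; 0; 0; 0]; [:: 0; 0; 0; 1; 0; 0]]; [:: [:: 0; 0; 1; 0; 1; 0]; [:: 0; 0; 0; 1; 0; 1]; [:: 1; 0; 0; 2; 0; 1]; [:: 0; 1; 2; 0; 1; 0]; [:: 1; 0; 0; 1; 0; 0]; [:: 0; 1; 1; 0; 0; 0]]; [:: [:: 0; 1; 1; 0; 0; 0]; [:: 1; 0; 0; 1; 0; 0]; [:: 1; 0; 0; 2; 0; 1]; [:: 0; 1; 2; 0; 1; 0]; [:: 0; 0; 0; 1; 0; 1]; [:: 0; 0; 1; 0; 1; 0]]].
Definition W_p22 : seq (seq int) := ([:: [:: 1; 1; 2; 2; 1; 1]; [:: 1; -1; -2; 2; -1; 1]; [:: 0; 1; -1; 0; 1; 0]; [:: 1; 0; 0; -1; 0; 1]; [:: -1; 1; 0; 0; -1; 1]; [:: -1; -1; 0; 0; 1; 1]])%R.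
Definition n_p22 : seq nat := [:: 12; 12; 3; 3; 4; 4].
Definition e_p22 : seq nat := [:: 0; 1; 2; 2; 6; 7].
Definition T_p22 : seq nat := [:: 6; 2; 8; 2; 2; 2; 0; 0].
Definition G_z2 : seq (seq (seq nat)) := [:: [:: [:: 1; 0; 0; 0; 0; 0]; [:: 0; 1; 0; 0; 0; 0]; [:: 0; 0; 1; 0; 0; 0]; [:: 0; 0; 0; 1; 0; 0]; [:: 0; 0; 0; 0; 1; 0]; [:: 0; 0; 0; 0; 0; 1]]; [:: [:: 0; 0; 0; 0; 0; 1]; [:: 0; 0; 0; 0; 1; 0]; [:: 0; 0; 1; 0; 0; 0]; [:: 0; 0; 0; 1; 0; 0]; [:: 0; 1; 0; 0; 0; 0]; [:: 1; 0; 0; 0; 0; 0]]; [:: [:: 0; 0; 0; 1; 0; 0]; [:: 0; 0; 1; 0; 0; 0]; [:: 0; 1; 1; 0; 1; 0]; [:: 1; 0; 0; 1; 0; 1]; [:: 0; 0; 1; 0; 0; 0]; [:: 0; 0; 0; 1; 0; 0]]; [:: [:: 0; 0; 0; 1; 0; 0]; [:: 0; 0; 1; 0; 0; 0]; [:: 0; 1; 1; 0; 1; 0]; [:: 1; 0; 0; 1; 0; 1]; [:: 0; 0; 1; 0; 0; 0]; [:: 0; 0; 0; 1; 0; 0]]; [:: [:: 0; 0; 0; 1; 0; 0]; [:: 0; 1; 0; 0; 1; 0]; [:: 0; 0; 2; 0; 0; 0]; [:: 1; 0; 0; 1; 0; 1]; [:: 0; 1; 0; 0; 1; 0]; [:: 0;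 0; 0; 1; 0; 0]]; [:: [:: 1; 0; 0; 0; 0; 1]; [:: 0; 0; 1; 0; 0; 0]; [:: 0; 1; 1; 0; 1; 0]; [:: 0; 0; 0; 2; 0; 0]; [:: 0; 0; 1; 0; 0; 0]; [:: 1; 0; 0; 0; 0; 1]]; [:: [:: 0; 0; 1; 0; 1; 0]; [:: 0; 0; 0; 1; 0; 1]; [:: 1; 0; 0; 2; 0; 1]; [:: 0; 1; 2; 0; 1; 0]; [:: 1; 0; 0; 1; 0; 0]; [:: 0; 1; 1; 0; 0; 0]]; [:: [:: 0; 1; 1; 0; 0; 0]; [:: 1; 0; 0; 1; 0; 0]; [:: 1; 0; 0; 2; 0; 1]; [:: 0; 1; 2; 0; 1; 0]; [:: 0; 0; 0; 1; 0; 1]; [:: 0; 0; 1; 0; 1; 0]]].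
Definition W_z2 : seq (seq int) := ([:: [:: 1; 1; 2; 2; 1; 1]; [:: 1; -1; -2; 2; -1; 1]; [:: 1; 0; 0; -1; 0; 1]; [:: 0; 1; -1; 0; 1; 0]; [:: -1; 1; 0; 0; -1; 1]; [:: -1; -1; 0; 0; 1; 1]])%R.
Definition n_z2 : seq nat := [:: 12; 12; 3; 3; 4; 4].
Definition e_z2 : seq nat := [:: 0; 1; 4; 5; 6; 7].
Definition T_z2 : seq nat := [:: 6; 2; 2; 2; 5; 5; 0; 0].
Definition G_z4 : seq (seq (seq nat)) := [:: [:: [:: 1; 0; 0; 0; 0; 0]; [:: 0; 1; 0; 0; 0; 0]; [:: 0; 0; 1; 0; 0; 0]; [:: 0; 0; 0; 1; 0; 0]; [:: 0; 0; 0; 0; 1; 0]; [:: 0; 0; 0; 0; 0; 1]]; [:: [:: 1; 0; 0; 0; 0; 0]; [:: 0; 1; 0; 0; 0; 0]; [:: 0; 0; 1; 0; 0; 0]; [:: 0; 0; 0; 1; 0; 0]; [:: 0; 0; 0; 0; 1; 0]; [:: 0; 0; 0; 0; 0; 1]]; [:: [:: 0; 0; 0; 0; 1; 1]; [:: 0; 2; 0; 0; 0; 0]; [:: 0; 0; 2; 0; 0; 0]; [:: 0; 0; 0; 2; 0; 0]; [:: 1; 0; 0; 0; 0; 1]; [:: 1; 0; 0; 0; 1; 0]]; [:: [:: 2; 0; 0; 0; 0; 0]; [:: 0; 0; 1; 1; 0; 0]; [:: 0; 1; 0; 1; 0; 0]; [:: 0; 1; 1; 0; 0; 0]; [:: 0;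 0; 0; 0; 2; 0]; [:: 0; 0; 0; 0; 0; 2]]; [:: [:: 0; 0; 0; 0; 1; 1]; [:: 0; 0; 1; 1; 0; 0]; [:: 0; 1; 0; 1; 0; 0]; [:: 0; 1; 1; 0; 0; 0]; [:: 1; 0; 0; 0; 0; 1]; [:: 1; 0; 0; 0; 1; 0]]; [:: [:: 0; 0; 0; 0; 1; 1]; [:: 0; 0; 1; 1; 0; 0]; [:: 0; 1; 0; 1; 0; 0]; [:: 0; 1; 1; 0; 0; 0]; [:: 1; 0; 0; 0; 0; 1]; [:: 1; 0; 0; 0; 1; 0]]; [:: [:: 0; 1; 1; 1; 0; 0]; [:: 1; 0; 0; 0; 1; 1]; [:: 1; 0; 0; 0; 1; 1]; [:: 1; 0; 0; 0; 1; 1]; [:: 0; 1; 1; 1; 0; 0]; [:: 0; 1; 1; 1; 0; 0]]; [:: [:: 0; 1; 1; 1; 0; 0]; [:: 1; 0; 0; 0; 1; 1]; [:: 1; 0; 0; 0; 1; 1]; [:: 1; 0; 0; 0; 1; 1]; [:: 0; 1; 1; 1; 0; 0]; [:: 0; 1; 1; 1; 0; 0]]].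
Definition W_z4 : seq (seq int) := ([:: [:: 1; 1; 1; 1; 1; 1]; [:: 1; -1; -1; -1; 1; 1]; [:: 0; -1; 1; 0; 0; 0]; [:: 0; -1; -1; 2; 0; 0]; [:: -1; 0; 0; 0; 1; 0]; [:: -1; 0; 0; 0; -1; 2]])%R.
Definition n_z4 : seq nat := [:: 6; 6; 2; 6; 2; 6].
Definition e_z4 : seq nat := [:: 0; 1; 2; 2; 3; 3].
Definition T_z4 : seq nat := [:: 6; 6; 6; 6; 0; 0; 0; 0].
Definition G_z7 : seq (seq (seq nat)) := [:: [:: [:: 1; 0; 0; 0; 0; 0]; [:: 0; 1; 0; 0; 0; 0]; [:: 0; 0; 1; 0; 0; 0]; [:: 0; 0; 0; 1; 0; 0]; [:: 0; 0; 0; 0; 1; 0]; [:: 0; 0; 0; 0; 0; 1]]; [:: [:: 1; 0; 0; 0; 0; 0]; [:: 0; 1; 0; 0; 0; 0]; [:: 0; 0; 1; 0; 0; 0]; [:: 0; 0; 0; 1; 0; 0]; [:: 0; 0; 0; 0; 1; 0]; [:: 0; 0; 0; 0; 0; 1]]; [:: [:: 0; 0; 0; 0; 1; 1]; [:: 0; 0; 1; 1; 0; 0]; [:: 0; 1; 0; 1; 0; 0]; [:: 0; 1; 1; 0; 0; 0]; [:: 1; 0; 0; 0; 0; 1]; [:: 1; 0; 0; 0; 1; 0]]; [:: [:: 0; 0; 0; 0; 1; 1]; [:: 0; 0; 1; 1; 0; 0]; [:: 0; 1; 0; 1; 0; 0]; [:: 0; 1; 1; 0; 0; 0]; [:: 1;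 0; 0; 0; 0; 1]; [:: 1; 0; 0; 0; 1; 0]]; [:: [:: 0; 0; 0; 0; 1; 1]; [:: 0; 2; 0; 0; 0; 0]; [:: 0; 0; 2; 0; 0; 0]; [:: 0; 0; 0; 2; 0; 0]; [:: 1; 0; 0; 0; 0; 1]; [:: 1; 0; 0; 0; 1; 0]]; [:: [:: 2; 0; 0; 0; 0; 0]; [:: 0; 0; 1; 1; 0; 0]; [:: 0; 1; 0; 1; 0; 0]; [:: 0; 1; 1; 0; 0; 0]; [:: 0; 0; 0; 0; 2; 0]; [:: 0; 0; 0; 0; 0; 2]]; [:: [:: 0; 1; 1; 1; 0; 0]; [:: 1; 0; 0; 0; 1; 1]; [:: 1; 0; 0; 0; 1; 1]; [:: 1; 0; 0; 0; 1; 1]; [:: 0; 1; 1; 1; 0; 0]; [:: 0; 1; 1; 1; 0; 0]]; [:: [:: 0; 1; 1; 1; 0; 0]; [:: 1; 0; 0; 0; 1; 1]; [:: 1; 0; 0; 0; 1; 1]; [:: 1; 0; 0; 0; 1; 1]; [:: 0; 1; 1; 1; 0; 0]; [:: 0; 1; 1; 1; 0; 0]]].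
Definition W_z7 : seq (seq int) := ([:: [:: 1; 1; 1; 1; 1; 1]; [:: 1; -1; -1; -1; 1; 1]; [:: -1; 0; 0; 0; 1; 0]; [:: -1; 0; 0; 0; -1; 2]; [:: 0; -1; 1; 0; 0; 0]; [:: 0; -1; -1; 2; 0; 0]])%R.
Definition n_z7 : seq nat := [:: 6; 6; 2; 6; 2; 6].
Definition e_z7 : seq nat := [:: 0; 1; 4; 4; 5; 5].
Definition T_z7 : seq nat := [:: 6; 6; 0; 0; 6; 6; 0; 0].
Definition G_z22 : seq (seq (seq nat)) := [:: [:: [:: 1; 0; 0; 0; 0; 0]; [:: 0; 1; 0; 0; 0; 0]; [:: 0; 0; 1; 0; 0; 0]; [:: 0; 0; 0; 1; 0; 0]; [:: 0; 0; 0; 0; 1; 0]; [:: 0; 0; 0; 0; 0; 1]]; [:: [:: 1; 0; 0; 0; 0; 0]; [:: 0; 1; 0; 0; 0; 0]; [:: 0; 0; 1; 0; 0; 0]; [:: 0; 0; 0; 1; 0; 0]; [:: 0; 0; 0; 0; 1; 0]; [:: 0; 0; 0; 0; 0; 1]]; [:: [:: 2; 0; 0; 0; 0; 0]; [:: 0; 2; 0; 0; 0; 0]; [:: 0; 0; 2; 0; 0; 0]; [:: 0; 0; 0; 2; 0; 0]; [:: 0; 0; 0; 0; 2; 0]; [:: 0; 0; 0; 0; 0; 2]]; [:: [:: 0; 0; 0; 0; 1; 1]; [:: 0; 0; 1; 1; 0; 0]; [:: 0; 1; 0; 1; 0; 0]; [:: 0; 1; 1; 0; 0; 0]; [:: 1;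 0; 0; 0; 0; 1]; [:: 1; 0; 0; 0; 1; 0]]; [:: [:: 0; 0; 0; 0; 1; 1]; [:: 0; 0; 1; 1; 0; 0]; [:: 0; 1; 0; 1; 0; 0]; [:: 0; 1; 1; 0; 0; 0]; [:: 1; 0; 0; 0; 0; 1]; [:: 1; 0; 0; 0; 1; 0]]; [:: [:: 0; 0; 0; 0; 1; 1]; [:: 0; 0; 1; 1; 0; 0]; [:: 0; 1; 0; 1; 0; 0]; [:: 0; 1; 1; 0; 0; 0]; [:: 1; 0; 0; 0; 0; 1]; [:: 1; 0; 0; 0; 1; 0]]; [:: [:: 0; 1; 1; 1; 0; 0]; [:: 1; 0; 0; 0; 1; 1]; [:: 1; 0; 0; 0; 1; 1]; [:: 1; 0; 0; 0; 1; 1]; [:: 0; 1; 1; 1; 0; 0]; [:: 0; 1; 1; 1; 0; 0]]; [:: [:: 0; 1; 1; 1; 0; 0]; [:: 1; 0; 0; 0; 1; 1]; [:: 1; 0; 0; 0; 1; 1]; [:: 1; 0; 0; 0; 1; 1]; [:: 0; 1; 1; 1; 0; 0]; [:: 0; 1; 1; 1; 0; 0]]].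
Definition W_z22 : seq (seq int) := ([:: [:: 1; 1; 1; 1; 1; 1]; [:: 1; -1; -1; -1; 1; 1]; [:: 0; -1; 1; 0; 0; 0]; [:: 0; -1; -1; 2; 0; 0]; [:: -1; 0; 0; 0; 1; 0]; [:: -1; 0; 0; 0; -1; 2]])%R.
Definition n_z22 : seq nat := [:: 6; 6; 2; 6; 2; 6].
Definition e_z22 : seq nat := [:: 0; 1; 2; 2; 2; 2].
Definition T_z22 : seq nat := [:: 6; 6; 12; 0; 0; 0; 0; 0].
Definition G_z33 : seq (seq (seq nat)) := [:: [:: [:: 1; 0; 0; 0; 0; 0]; [:: 0; 1; 0; 0; 0; 0]; [:: 0; 0; 1; 0; 0; 0]; [:: 0; 0; 0; 1; 0; 0]; [:: 0; 0; 0; 0; 1; 0]; [:: 0; 0; 0; 0; 0; 1]]; [:: [:: 1; 0; 0; 0; 0; 0]; [:: 0; 1; 0; 0; 0; 0]; [:: 0; 0; 1; 0; 0; 0]; [:: 0; 0; 0; 1; 0; 0]; [:: 0; 0; 0; 0; 1; 0]; [:: 0; 0; 0; 0; 0; 1]]; [:: [:: 0; 0; 0; 0; 1; 1]; [:: 0; 0; 1; 1; 0; 0]; [:: 0; 1; 0; 1; 0; 0]; [:: 0; 1; 1; 0; 0; 0]; [:: 1; 0; 0; 0; 0; 1]; [:: 1; 0; 0; 0; 1; 0]]; [:: [:: 2; 0; 0; 0; 0; 0]; [:: 0; 2; 0; 0; 0; 0]; [:: 0; 0; 2; 0; 0; 0]; [:: 0; 0; 0; 2; 0; 0]; [:: 0;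 0; 0; 0; 2; 0]; [:: 0; 0; 0; 0; 0; 2]]; [:: [:: 0; 0; 0; 0; 1; 1]; [:: 0; 0; 1; 1; 0; 0]; [:: 0; 1; 0; 1; 0; 0]; [:: 0; 1; 1; 0; 0; 0]; [:: 1; 0; 0; 0; 0; 1]; [:: 1; 0; 0; 0; 1; 0]]; [:: [:: 0; 0; 0; 0; 1; 1]; [:: 0; 0; 1; 1; 0; 0]; [:: 0; 1; 0; 1; 0; 0]; [:: 0; 1; 1; 0; 0; 0]; [:: 1; 0; 0; 0; 0; 1]; [:: 1; 0; 0; 0; 1; 0]]; [:: [:: 0; 1; 1; 1; 0; 0]; [:: 1; 0; 0; 0; 1; 1]; [:: 1; 0; 0; 0; 1; 1]; [:: 1; 0; 0; 0; 1; 1]; [:: 0; 1; 1; 1; 0; 0]; [:: 0; 1; 1; 1; 0; 0]]; [:: [:: 0; 1; 1; 1; 0; 0]; [:: 1; 0; 0; 0; 1; 1]; [:: 1; 0; 0; 0; 1; 1]; [:: 1; 0; 0; 0; 1; 1]; [:: 0; 1; 1; 1; 0; 0]; [:: 0; 1; 1; 1; 0; 0]]].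
Definition W_z33 : seq (seq int) := ([:: [:: 1; 1; 1; 1; 1; 1]; [:: 1; -1; -1; -1; 1; 1]; [:: 0; -1; 1; 0; 0; 0]; [:: 0; -1; -1; 2; 0; 0]; [:: -1; 0; 0; 0; 1; 0]; [:: -1; 0; 0; 0; -1; 2]])%R.
Definition n_z33 : seq nat := [:: 6; 6; 2; 6; 2; 6].
Definition e_z33 : seq nat := [:: 0; 1; 3; 3; 3; 3].
Definition T_z33 : seq nat := [:: 6; 6; 0; 12; 0; 0; 0; 0].
Definition G_p33 : seq (seq (seq nat)) := [:: [:: [:: 1; 0; 0; 0; 0; 0]; [:: 0; 1; 0; 0; 0; 0]; [:: 0; 0; 1; 0; 0; 0]; [:: 0; 0; 0; 1; 0; 0]; [:: 0; 0; 0; 0; 1; 0]; [:: 0; 0; 0; 0; 0; 1]]; [:: [:: 0; 0; 0; 0; 0; 1]; [:: 0; 0; 0; 0; 1; 0]; [:: 0; 0; 1; 0; 0; 0]; [:: 0; 0; 0; 1; 0; 0]; [:: 0; 1; 0; 0; 0; 0]; [:: 1; 0; 0; 0; 0; 0]]; [:: [:: 0; 0; 0; 1; 0; 0]; [:: 0; 0; 1; 0; 0; 0]; [:: 0; 1; 1; 0; 1; 0]; [:: 1; 0; 0; 1; 0; 1]; [:: 0; 0; 1; 0; 0; 0]; [:: 0; 0; 0; 1; 0; 0]]; [:: [:: 1; 0; 0; 0; 0; 1]; [:: 0; 1; 0; 0; 1; 0]; [:: 0; 0; 2; 0; 0; 0]; [:: 0; 0; 0; 2; 0; 0]; [:: 0;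 1; 0; 0; 1; 0]; [:: 1; 0; 0; 0; 0; 1]]; [:: [:: 0; 0; 0; 1; 0; 0]; [:: 0; 0; 1; 0; 0; 0]; [:: 0; 1; 1; 0; 1; 0]; [:: 1; 0; 0; 1; 0; 1]; [:: 0; 0; 1; 0; 0; 0]; [:: 0; 0; 0; 1; 0; 0]]; [:: [:: 0; 0; 0; 1; 0; 0]; [:: 0; 0; 1; 0; 0; 0]; [:: 0; 1; 1; 0; 1; 0]; [:: 1; 0; 0; 1; 0; 1]; [:: 0; 0; 1; 0; 0; 0]; [:: 0; 0; 0; 1; 0; 0]]; [:: [:: 0; 0; 1; 0; 1; 0]; [:: 0; 0; 0; 1; 0; 1]; [:: 1; 0; 0; 2; 0; 1]; [:: 0; 1; 2; 0; 1; 0]; [:: 1; 0; 0; 1; 0; 0]; [:: 0; 1; 1; 0; 0; 0]]; [:: [:: 0; 1; 1; 0; 0; 0]; [:: 1; 0; 0; 1; 0; 0]; [:: 1; 0; 0; 2; 0; 1]; [:: 0; 1; 2; 0; 1; 0]; [:: 0; 0; 0; 1; 0; 1]; [:: 0; 0; 1; 0; 1; 0]]].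
Definition W_p33 : seq (seq int) := ([:: [:: 1; 1; 2; 2; 1; 1]; [:: 1; -1; -2; 2; -1; 1]; [:: 0; 1; -1; 0; 1; 0]; [:: 1; 0; 0; -1; 0; 1]; [:: -1; 1; 0; 0; -1; 1]; [:: -1; -1; 0; 0; 1; 1]])%R.
Definition n_p33 : seq nat := [:: 12; 12; 3; 3; 4; 4].
Definition e_p33 : seq nat := [:: 0; 1; 3; 3; 6; 7].
Definition T_p33 : seq nat := [:: 6; 2; 2; 8; 2; 2; 0; 0].
Definition zl_p22 : seq (seq nat) := ([:: [:: 1; 0; 1; 0; 0; 0; 0; 0];
      [:: 0; 1; 1; 0; 0; 0; 0; 0];
      [:: 1; 1; 2; 0; 0; 0; 0; 0];
      [:: 0; 0; 0; 0; 0; 0; 0; 0];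
      [:: 0; 0; 0; 0; 0; 0; 0; 0];
      [:: 0; 0; 0; 0; 0; 0; 0; 0];
      [:: 0; 0; 0; 0; 0; 0; 1; 0];
      [:: 0; 0; 0; 0; 0; 0; 0; 1]])%N.
Definition zl_z2 : seq (seq nat) := ([:: [:: 1; 0; 0; 0; 0; 0; 0; 0];
      [:: 0; 1; 0; 0; 0; 0; 0; 0];
      [:: 0; 0; 0; 1; 0; 0; 0; 0];
      [:: 0; 0; 1; 0; 0; 0; 0; 0];
      [:: 0; 0; 0; 0; 1; 0; 0; 0];
      [:: 0; 0; 0; 0; 0; 1; 0; 0];
      [:: 0; 0; 0; 0; 0; 0; 1; 0];
      [:: 0; 0; 0; 0; 0; 0; 0; 1]])%N.
Definition zl_z4 : seq (seq nat) := ([:: [:: 1; 1; 1; 1; 0; 0; 0; 0];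
      [:: 1; 1; 1; 1; 0; 0; 0; 0];
      [:: 1; 1; 2; 0; 0; 0; 0; 0];
      [:: 1; 1; 0; 2; 0; 0; 0; 0];
      [:: 0; 0; 0; 0; 0; 0; 0; 0];
      [:: 0; 0; 0; 0; 0; 0; 0; 0];
      [:: 0; 0; 0; 0; 0; 0; 0; 0];
      [:: 0; 0; 0; 0; 0; 0; 0; 0]])%N.
Definition zl_z7 : seq (seq nat) := ([:: [:: 1; 1; 0; 0; 0; 0; 0; 0];
      [:: 1; 1; 0; 0; 0; 0; 0; 0];
      [:: 0; 0; 0; 2; 0; 0; 0; 0];
      [:: 0; 0; 2; 0; 0; 0; 0; 0];
      [:: 0; 0; 0; 0; 2; 0; 0; 0];
      [:: 0; 0; 0; 0; 0; 2; 0; 0];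
      [:: 0; 0; 0; 0; 0; 0; 0; 0];
      [:: 0; 0; 0; 0; 0; 0; 0; 0]])%N.
Definition zl_z22 : seq (seq nat) := ([:: [:: 1; 1; 2; 0; 0; 0; 0; 0];
      [:: 1; 1; 2; 0; 0; 0; 0; 0];
      [:: 2; 2; 4; 0; 0; 0; 0; 0];
      [:: 0; 0; 0; 0; 0; 0; 0; 0];
      [:: 0; 0; 0; 0; 0; 0; 0; 0];
      [:: 0; 0; 0; 0; 0; 0; 0; 0];
      [:: 0; 0; 0; 0; 0; 0; 0; 0];
      [:: 0; 0; 0; 0; 0; 0; 0; 0]])%N.
Definition zl_z33 : seq (seq nat) := ([:: [:: 1; 1; 0; 2; 0; 0; 0; 0];
      [:: 1; 1; 0; 2; 0; 0; 0; 0];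
      [:: 0; 0; 0; 0; 0; 0; 0; 0];
      [:: 2; 2; 0; 4; 0; 0; 0; 0];
      [:: 0; 0; 0; 0; 0; 0; 0; 0];
      [:: 0; 0; 0; 0; 0; 0; 0; 0];
      [:: 0; 0; 0; 0; 0; 0; 0; 0];
      [:: 0; 0; 0; 0; 0; 0; 0; 0]])%N.
Definition zl_p33 : seq (seq nat) := ([:: [:: 1; 0; 0; 1; 0; 0; 0; 0];
      [:: 0; 1; 0; 1; 0; 0; 0; 0];
      [:: 0; 0; 0; 0; 0; 0; 0; 0];
      [:: 1; 1; 0; 2; 0; 0; 0; 0];
      [:: 0; 0; 0; 0; 0; 0; 0; 0];
      [:: 0; 0; 0; 0; 0; 0; 0; 0];
      [:: 0; 0; 0; 0; 0; 0; 1; 0];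
      [:: 0; 0; 0; 0; 0; 0; 0; 1]])%N.
From mathcomp Require Import zify.

Lemma mget_mkL f i j : i < 6 -> j < 6 -> mget (mkL f) i j = f i j.
Proof.
move=> Hi Hj; rewrite /mget /mkL (nth_map 0) ?size_iota // nth_iota //.
by rewrite (nth_map 0) ?size_iota // nth_iota.
Qed.

Lemma mkL_ext f g : (forall i j, i < 6 -> j < 6 -> f i j = g i j) -> mkL f = mkL g.
Proof.
move=> H; rewrite /mkL; apply/eq_in_map => i; rewrite mem_iota => /andP[_ Hi].
by apply/eq_in_map => j; rewrite mem_iota => /andP[_ Hj]; apply: H.
Qed.

Lemma sumn_ext (g h : nat -> nat) n : (forall k, k < n -> g k = h k) ->
  sumn [seq g k | k <- iota 0 n] = sumn [seq h k | k <- iota 0 n].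
Proof. by move=> H; congr sumn; apply/eq_in_map => k; rewrite mem_iota => /andP[_ /H]. Qed.

Lemma lmul_mkL f g : lmul (mkL f) (mkL g) =
  mkL (fun i j => sumn [seq f i k * g k j | k <- iota 0 6]).
Proof.
apply: mkL_ext => i j Hi Hj; apply: sumn_ext => k Hk.
by rewrite !mget_mkL.
Qed.

Lemma lsub_mkL f g : lsub (mkL f) (mkL g) = mkL (fun i j => f i j - g i j).
Proof. by apply: mkL_ext => i j Hi Hj; rewrite !mget_mkL. Qed.

Lemma ladd4_mkL f g h k : ladd4 (mkL f) (mkL g) (mkL h) (mkL k) =
   mkL (fun i j => f i j + g i j + h i j + k i j).
Proof. by apply: mkL_ext => i j Hi Hj; rewrite !mget_mkL. Qed.

Lemma ltr_mkL f : ltr (mkL f) = sumn [seq f i i | i <- iota 0 6].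
Proof. by apply: sumn_ext => i Hi; rewrite mget_mkL. Qed.

Lemma leqM_mkL f g : (forall i j, i < 6 -> j < 6 -> f i j <= g i j) -> leqM (mkL f) (mkL g).
Proof.
move=> H; apply/allP => i; rewrite mem_iota => /andP[_ Hi].
by apply/allP => j; rewrite mem_iota => /andP[_ Hj]; rewrite !mget_mkL // H.
Qed.

Lemma sumn_term (g : nat -> nat) n i : i < n -> g i <= sumn [seq g k | k <- iota 0 n].
Proof.
elim: n => // n IH; rewrite ltnS leq_eqVlt => /orP[/eqP->|Hi].
  by rewrite -addn1 iotaD map_cat sumn_cat /= add0n addn0 leq_addl.
by rewrite -addn1 iotaD map_cat sumn_cat (leq_trans (IH Hi)) // leq_addr.
Qed.

Lemma vecsS L s : vecs L.+1 s =
  flatten [seq [seq x :: w | w <- vecs L (s - x * x)] | x <- iota 0 s.+1 & x * x <= s].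
Proof. by []. Qed.

Lemma vecs_complete w : w \in vecs (size w) (sumsq w).
Proof.
elim: w => [|x w IH] //.
have -> : sumsq (x :: w) = x * x + sumsq w by [].
rewrite [size _]/= vecsS; apply/flatten_mapP; exists x.
  rewrite mem_filter leq_addr mem_iota /= add0n ltnS.
  by apply: leq_trans (leq_addr _ _); case: x => // x; rewrite mulSn leq_addr.
by rewrite addKn map_f.
Qed.

Section Gen.
Variables (target : nat -> nat -> nat -> nat) (K : nat) (M : nat -> nat -> nat).
Hypothesis Hsym : forall i j, i < 6 -> j < 6 -> M i j = M j i.
Hypothesis Hgram : forall i k, i < 6 -> k < 6 ->
  sumn [seq M i j * M k j | j <- iota 0 6] = target i k (M i k).
Hypothesis Hdiag : forall i, i < 6 -> M i i <= K.

Lemma take_mkL k : k <= 6 -> take k (mkL M) = [seq [seq M i j | j <- iota 0 6] | i <- iota 0 k].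
Proof.
move=> Hk; rewrite /mkL -map_take take_iota.
by move/minn_idPl: Hk => ->.
Qed.

Lemma gen_complete k : k <= 6 -> take k (mkL M) \in gen target K k.
Proof.
elim: k => [|k IH] Hk; first by rewrite take0 inE.
have Hk' : k < 6 by [].
rewrite (take_nth [::]) ?size_map ?size_iota //=.
apply/flatten_mapP; exists (take k (mkL M)); first exact: IH (ltnW Hk).
apply: map_f.
set rows := take k (mkL M).
have Hrows : rows = [seq [seq M i j | j <- iota 0 6] | i <- iota 0 k] by rewrite /rows take_mkL // ltnW.
have Hsz : size rows = k by rewrite Hrows size_map size_iota.
have Hrow : nth [::] (mkL M) k = [seq M k j | j <- iota 0 6].
  by rewrite /mkL (nth_map 0) ?size_iota // nth_iota.
have Hpre : [seq nth 0 r k | r <- rows] = [seq M k j | j <- iota 0 k].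
  rewrite Hrows -map_comp; apply/eq_in_map => i; rewrite mem_iota add0n => /andP[_ Hi].
  rewrite /comp (nth_map 0) ?size_iota // nth_iota // Hsym //.
  exact: ltn_trans Hi Hk'.
have Hsplit : iota 0 6 = iota 0 k ++ k :: iota k.+1 (5 - k).
  have -> : 6 = k + (6 - k) by rewrite subnKC // ltnW.
  rewrite iotaD add0n; congr (_ ++ _).
  by have -> : 6 - k = (5 - k).+1 by rewrite subSn.
rewrite Hrow /rowcands Hsz Hpre mem_filter; apply/andP; split.
  apply/allP => j; rewrite mem_iota add0n => /andP[_ Hj].
  have Hj6 : j < 6 by apply: ltn_trans Hj Hk'.
  rewrite Hrows (nth_map 0) ?size_iota // nth_iota // (nth_map 0) ?size_iota // nth_iota //.
  rewrite !add0n /dot (Hsym Hk' Hj6) -(Hgram Hj6 Hk'); apply/eqP; apply: sumn_ext => i Hi.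
  by rewrite !(nth_map 0) ?size_iota // !nth_iota.
apply/flatten_mapP; exists (M k k); first by rewrite mem_iota /= ltnS Hdiag.
have Hss : sumsq [seq M k j | j <- iota 0 6] = target k k (M k k).
  by rewrite -Hgram // /sumsq -map_comp.
rewrite Hsplit map_cat /= /sumsq map_cat /= sumn_cat /= in Hss.
rewrite /sumsq in Hss *.
set w := [seq M k j | j <- iota k.+1 (5 - k)].
have -> : sumn [seq x * x | x <- [seq M k j | j <- iota 0 k]] + M k k * M k k <= target k k (M k k).
  by rewrite -Hss addnA leq_addr.
rewrite Hsplit map_cat /=; apply: map_f.
have Hw := vecs_complete w; rewrite {1}/w size_map size_iota in Hw.
by rewrite -Hss addnA addKn.
Qed.

Lemma gensym_complete : mkL M \in gensym target K.
Proof.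
have := gen_complete (leqnn 6).
by rewrite take_oversize // size_map size_iota.
Qed.
End Gen.

Lemma lall_all T (a : T -> bool) s : lall a s = all a s.
Proof. by elim: s => //= x s ->; case: (a x). Qed.
Lemma lhas_has T (a : T -> bool) s : lhas a s = has a s.
Proof. by elim: s => //= x s ->; case: (a x). Qed.
Lemma lall2_nth T (r : T -> T -> bool) x0 s t : lall2 r s t ->
  size s = size t /\ forall i, i < size s -> r (nth x0 s i) (nth x0 t i).
Proof.
elim: s t => [|x s IH] [|y t] //=.
case: ifP => // Hr /IH [-> H]; split => // [[|i]] //= Hi; exact: H.
Qed.

Lemma eqconjP p g g0 : eqconj p g g0 ->
  forall i j, i < 6 -> j < 6 -> mget g i j = mget g0 (nth 0 p i) (nth 0 p j).
Proof.
rewrite /eqconj lall_all => /allP H i j Hi Hj.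
have := H i; rewrite mem_iota add0n Hi => /(_ isT); rewrite lall_all => /allP /(_ j).
by rewrite mem_iota add0n Hj => /(_ isT) /eqP.
Qed.

Lemma in_orbitP G0 Gs : in_orbit G0 Gs -> size Gs = 8 ->
  exists2 p, p \in permutations (iota 0 6) &
     forall l, l < 8 -> eqconj p (nth [::] Gs l) (nth [::] G0 l).
Proof.
rewrite /in_orbit lhas_has => /hasP [p Hp H] Hsz; exists p => // l Hl.
have [Hsz' H'] := lall2_nth [::] H.
rewrite !size_rev in Hsz'.
have Hl' : 7 - l < size (rev Gs) by rewrite size_rev Hsz; lia.
have := H' _ Hl'.
rewrite !nth_rev -?Hsz' ?Hsz; try lia.
by have -> : 8 - (7 - l).+1 = l by lia.
Qed.

Lemma searchP T G0 : search T G0 ->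
  forall A, A \in gensym tA 1 -> ltr A = nth 0 T 1 ->
  forall B C D, B \in gensym (tB A) 2 -> ltr B = nth 0 T 2 -> lmul A B = B ->
  C \in gensym (tB A) 2 -> ltr C = nth 0 T 3 -> lmul A C = C ->
  D \in gensym (tB A) 2 -> ltr D = nth 0 T 4 -> lmul A D = D ->
  lmul B C = lmul C B -> leqM D (lmul B C) ->
  forall E, E = lsub (lmul B C) D -> ltr E = nth 0 T 5 ->
  lmul E E = ladd4 idL A E (mkL (fun _ _ => 0)) ->
  lmul B D = ladd4 C E (mkL (fun _ _ => 0)) (mkL (fun _ _ => 0)) ->
  forall H, H \in gensym (tH (ladd4 B C D E)) 0 -> ltr H = nth 0 T 6 ->
  in_orbit G0 [:: idL; A; B; C; D; E; H; lmul A H].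
Proof.
move=> Hs A HA HtA B C D HB HtB HAB HC HtC HAC HD HtD HAD HBC HDBC E HE HtE HEE HBD H HH HtH.
move/allP: Hs => /(_ A HA); case: ifP => [_|]; last by rewrite HtA eqxx.
cbv beta zeta.
move/allP => /(_ B); rewrite mem_filter HtB HAB !eqxx HB => /(_ isT).
move/allP => /(_ C); rewrite mem_filter HtC HAC !eqxx HC => /(_ isT).
case: ifP => [_|]; last by rewrite HBC eqxx.
move/allP => /(_ D); rewrite mem_filter HtD HAD !eqxx HD => /(_ isT).
case: ifP => [_|]; last by rewrite HDBC.
rewrite -HE.
case: ifP => [_|]; last by rewrite HtE eqxx.
case: ifP => [_|]; last by rewrite HEE eqxx.
case: ifP => [_|]; last by rewrite HBD eqxx.
move/allP => /(_ H HH); case: ifP => [_|] //; by rewrite HtH eqxx.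
Qed.

Definition nfus l m v := nth 0 (nth [::] (nth [::] NL l) m) v.

Section Classify.
Variable f : nat -> nat -> nat -> nat.
Hypothesis H0 : forall i j, i < 6 -> j < 6 -> f 0 i j = (i == j).
Hypothesis Hsym : forall l i j, l < 8 -> i < 6 -> j < 6 -> f l i j = f l j i.
Hypothesis Hmul : forall l m i j, l < 8 -> m < 8 -> i < 6 -> j < 6 ->
  sumn [seq f l i k * f m k j | k <- iota 0 6] = sumn [seq nfus l m v * f v i j | v <- iota 0 8].

Lemma Pm l m i j : l < 8 -> m < 8 -> i < 6 -> j < 6 ->
  sumn [seq f l i k * f m k j | k <- iota 0 6] = sumn [seq nfus l m v * f v i j | v <- iota 0 8].
Proof. exact: Hmul. Qed.

Lemma gram_of l g : l < 8 ->
  (forall i k, i < 6 -> k < 6 -> sumn [seq f l i j * f l j k | j <- iota 0 6] = g i k) ->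
  forall i k, i < 6 -> k < 6 -> sumn [seq f l i j * f l k j | j <- iota 0 6] = g i k.
Proof.
move=> Hl H i k Hi Hk; rewrite -H //; apply: sumn_ext => j Hj.
by rewrite (Hsym Hl Hk).
Qed.

Lemma diag_le l i c : l < 8 -> i < 6 ->
  sumn [seq f l i j * f l i j | j <- iota 0 6] = c -> f l i i * f l i i <= c.
Proof. by move=> Hl Hi <-; apply: (sumn_term (fun j => f l i j * f l i j)). Qed.

Lemma inB l : l < 8 ->
  (forall i j, i < 6 -> j < 6 -> sumn [seq f l i k * f l k j | k <- iota 0 6] = f 0 i j + f 1 i j + f l i j) ->
  (forall i, i < 6 -> f 1 i i <= 1) ->
  mkL (f l) \in gensym (tB (mkL (f 1))) 2.
Proof.
move=> Hl Hr H1.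
have Hg := gram_of Hl (g := fun i k => f 0 i k + f 1 i k + f l i k) Hr.
apply: gensym_complete.
- by move=> i j Hi Hj; apply: Hsym.
- by move=> i k Hi Hk; rewrite /tB mget_mkL // -H0 // Hg.
- move=> i Hi; have := diag_le Hl Hi (Hg _ _ Hi Hi).
  rewrite H0 // eqxx /= => Hb; have Ha := H1 _ Hi; nia.
Qed.

End Classify.

Ltac pm f l m i j Hi Hj :=
  let H := fresh in
  have H := @Pm f _ l m i j isT isT Hi Hj;
  rewrite /nfus /NL /= in H.

Theorem classify T G0 : search T G0 -> size G0 = 8 -> nth 0 T 6 = 0 ->
  forall f : nat -> nat -> nat -> nat,
  (forall i j, i < 6 -> j < 6 -> f 0 i j = (i == j)) ->
  (forall l i j, l < 8 -> i < 6 -> j < 6 -> f l i j = f l j i) ->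
  (forall l m i j, l < 8 -> m < 8 -> i < 6 -> j < 6 ->
     sumn [seq f l i k * f m k j | k <- iota 0 6] = sumn [seq nfus l m v * f v i j | v <- iota 0 8]) ->
  (forall l, l < 8 -> sumn [seq f l i i | i <- iota 0 6] = nth 0 T l) ->
  exists2 p, p \in permutations (iota 0 6) &
    forall l i j, l < 8 -> i < 6 -> j < 6 -> f l i j = mget (nth [::] G0 l) (nth 0 p i) (nth 0 p j).
Proof.
move=> Hs Hsz HT6 f H0 Hsym Hmul Htr.
have rel l m g : l < 8 -> m < 8 ->
   (forall i j, i < 6 -> j < 6 -> sumn [seq nfus l m v * f v i j | v <- iota 0 8] = g i j) ->
   forall i j, i < 6 -> j < 6 -> sumn [seq f l i k * f m k j | k <- iota 0 6] = g i j.
  by move=> Hl Hm Hg i j Hi Hj; rewrite Hmul // Hg.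
have r11 : forall i j, i < 6 -> j < 6 -> sumn [seq f 1 i k * f 1 k j | k <- iota 0 6] = f 0 i j.
  by apply: (rel 1 1 (fun i j => f 0 i j)) => // i j _ _; rewrite /nfus /NL /=; lia.
have r22 : forall i j, i < 6 -> j < 6 -> sumn [seq f 2 i k * f 2 k j | k <- iota 0 6] = f 0 i j + f 1 i j + f 2 i j.
  by apply: (rel 2 2 (fun i j => f 0 i j + f 1 i j + f 2 i j)) => // i j _ _; rewrite /nfus /NL /=; lia.
have r33 : forall i j, i < 6 -> j < 6 -> sumn [seq f 3 i k * f 3 k j | k <- iota 0 6] = f 0 i j + f 1 i j + f 3 i j.
  by apply: (rel 3 3 (fun i j => f 0 i j + f 1 i j + f 3 i j)) => // i j _ _; rewrite /nfus /NL /=; lia.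
have r44 : forall i j, i < 6 -> j < 6 -> sumn [seq f 4 i k * f 4 k j | k <- iota 0 6] = f 0 i j + f 1 i j + f 4 i j.
  by apply: (rel 4 4 (fun i j => f 0 i j + f 1 i j + f 4 i j)) => // i j _ _; rewrite /nfus /NL /=; lia.
have r55 : forall i j, i < 6 -> j < 6 -> sumn [seq f 5 i k * f 5 k j | k <- iota 0 6] = f 0 i j + f 1 i j + f 5 i j.
  by apply: (rel 5 5 (fun i j => f 0 i j + f 1 i j + f 5 i j)) => // i j _ _; rewrite /nfus /NL /=; lia.
have r66 : forall i j, i < 6 -> j < 6 -> sumn [seq f 6 i k * f 6 k j | k <- iota 0 6] = f 0 i j + f 2 i j + f 3 i j + f 4 i j + f 5 i j.
  by apply: (rel 6 6 (fun i j => f 0 i j + f 2 i j + f 3 i j + f 4 i j + f 5 i j)) => // i j _ _; rewrite /nfus /NL /=; lia.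
have r12 : forall i j, i < 6 -> j < 6 -> sumn [seq f 1 i k * f 2 k j | k <- iota 0 6] = f 2 i j.
  by apply: (rel 1 2 (fun i j => f 2 i j)) => // i j _ _; rewrite /nfus /NL /=; lia.
have r13 : forall i j, i < 6 -> j < 6 -> sumn [seq f 1 i k * f 3 k j | k <- iota 0 6] = f 3 i j.
  by apply: (rel 1 3 (fun i j => f 3 i j)) => // i j _ _; rewrite /nfus /NL /=; lia.
have r14 : forall i j, i < 6 -> j < 6 -> sumn [seq f 1 i k * f 4 k j | k <- iota 0 6] = f 4 i j.
  by apply: (rel 1 4 (fun i j => f 4 i j)) => // i j _ _; rewrite /nfus /NL /=; lia.
have r16 : forall i j, i < 6 -> j < 6 -> sumn [seq f 1 i k * f 6 k j | k <- iota 0 6] = f 7 i j.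
  by apply: (rel 1 6 (fun i j => f 7 i j)) => // i j _ _; rewrite /nfus /NL /=; lia.
have r23 : forall i j, i < 6 -> j < 6 -> sumn [seq f 2 i k * f 3 k j | k <- iota 0 6] = f 4 i j + f 5 i j.
  by apply: (rel 2 3 (fun i j => f 4 i j + f 5 i j)) => // i j _ _; rewrite /nfus /NL /=; lia.
have r32 : forall i j, i < 6 -> j < 6 -> sumn [seq f 3 i k * f 2 k j | k <- iota 0 6] = f 4 i j + f 5 i j.
  by apply: (rel 3 2 (fun i j => f 4 i j + f 5 i j)) => // i j _ _; rewrite /nfus /NL /=; lia.
have r24 : forall i j, i < 6 -> j < 6 -> sumn [seq f 2 i k * f 4 k j | k <- iota 0 6] = f 3 i j + f 5 i j.
  by apply: (rel 2 4 (fun i j => f 3 i j + f 5 i j)) => // i j _ _; rewrite /nfus /NL /=; lia.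
have d1 : forall i, i < 6 -> f 1 i i <= 1.
  move=> i Hi; have := diag_le (f := f) (l := 1) isT Hi (gram_of Hsym (l := 1) (g := fun i j => f 0 i j) isT r11 Hi Hi).
  by rewrite H0 // eqxx /=; nia.
have HA : mkL (f 1) \in gensym tA 1.
  apply: gensym_complete.
  - by move=> i j Hi Hj; apply: Hsym.
  - by move=> i k Hi Hk; rewrite /tA -H0 //; apply: (gram_of Hsym (l := 1) (g := fun i j => f 0 i j)).
  - exact: d1.
have HB := inB H0 Hsym (l := 2) isT r22 d1.
have HC := inB H0 Hsym (l := 3) isT r33 d1.
have HD := inB H0 Hsym (l := 4) isT r44 d1.
have trm l : l < 8 -> ltr (mkL (f l)) = nth 0 T l by move=> Hl; rewrite ltr_mkL Htr.
have E5 : mkL (f 5) = lsub (lmul (mkL (f 2)) (mkL (f 3))) (mkL (f 4)).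
  by rewrite lmul_mkL lsub_mkL; apply: mkL_ext => i j Hi Hj; rewrite r23 // addKn.
have Hid : idL = mkL (f 0) by apply: mkL_ext => i j Hi Hj; rewrite H0.
have H7 : lmul (mkL (f 1)) (mkL (f 6)) = mkL (f 7) by rewrite lmul_mkL; apply: mkL_ext => i j Hi Hj; rewrite r16.
have HH : mkL (f 6) \in gensym (tH (ladd4 (mkL (f 2)) (mkL (f 3)) (mkL (f 4)) (mkL (f 5)))) 0.
  apply: gensym_complete.
  - by move=> i j Hi Hj; apply: Hsym.
  - move=> i k Hi Hk; rewrite /tH ladd4_mkL mget_mkL // -H0 //.
    rewrite (gram_of Hsym (l := 6) (g := fun i j => f 0 i j + f 2 i j + f 3 i j + f 4 i j + f 5 i j)) //.
    by rewrite !addnA.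
  - by move=> i Hi; apply: (leq_trans (sumn_term (fun i => f 6 i i) Hi)); rewrite Htr // HT6.
have m1 l : (forall i j, i < 6 -> j < 6 -> sumn [seq f 1 i k * f l k j | k <- iota 0 6] = f l i j) ->
    lmul (mkL (f 1)) (mkL (f l)) = mkL (f l).
  by move=> Hr; rewrite lmul_mkL; apply: mkL_ext => i j Hi Hj; rewrite Hr.
have HBC : lmul (mkL (f 2)) (mkL (f 3)) = lmul (mkL (f 3)) (mkL (f 2)).
  by rewrite !lmul_mkL; apply: mkL_ext => i j Hi Hj; rewrite r23 // r32.
have HDBC : leqM (mkL (f 4)) (lmul (mkL (f 2)) (mkL (f 3))).
  by rewrite lmul_mkL; apply: leqM_mkL => i j Hi Hj; rewrite r23 // leq_addr.
have HEE : lmul (mkL (f 5)) (mkL (f 5)) = ladd4 idL (mkL (f 1)) (mkL (f 5)) (mkL (fun _ _ => 0)).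
  by rewrite Hid lmul_mkL ladd4_mkL; apply: mkL_ext => i j Hi Hj; rewrite r55 // addn0.
have HBD : lmul (mkL (f 2)) (mkL (f 4)) = ladd4 (mkL (f 3)) (mkL (f 5)) (mkL (fun _ _ => 0)) (mkL (fun _ _ => 0)).
  by rewrite lmul_mkL ladd4_mkL; apply: mkL_ext => i j Hi Hj; rewrite r24 // !addn0.
have := searchP Hs HA (trm 1 isT) HB (trm 2 isT) (m1 _ r12) HC (trm 3 isT) (m1 _ r13) HD (trm 4 isT) (m1 _ r14) HBC HDBC E5 (trm 5 isT) HEE HBD HH (trm 6 isT).
rewrite H7 Hid.
have -> : [:: mkL (f 0); mkL (f 1); mkL (f 2); mkL (f 3); mkL (f 4); mkL (f 5); mkL (f 6); mkL (f 7)] =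
   [seq mkL (f l) | l <- iota 0 8] by [].
move=> Ho; have [p Hp Hc] := in_orbitP Ho (size_map _ _).
exists p => // l i j Hl Hi Hj.
have := eqconjP (Hc l Hl) Hi Hj.
by rewrite (nth_map 0) ?size_iota // nth_iota // mget_mkL.
Qed.


Section Alg.
Local Open Scope ring_scope.

Lemma sum_ordE (V : nmodType) n (F : 'I_n.+1 -> V) :
  \sum_(k < n.+1) F k = foldr (fun k acc => F (inord k) + acc) 0 (iota 0 n.+1).
Proof.
rewrite (eq_bigr (fun k : 'I_n.+1 => F (inord k))) => [|k _]; last by rewrite inord_val.
rewrite -(big_mkord xpredT (fun k => F (inord k))) /index_iota subn0.
by elim: (iota 0 n.+1) => [|x s IH]; rewrite ?big_nil ?big_cons ?IH.
Qed.

Lemma sum_ordN n (F : 'I_n.+1 -> nat) :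
  \sum_(k < n.+1) F k = sumn [seq F (inord k) | k <- iota 0 n.+1].
Proof. by rewrite sum_ordE; elim: (iota 0 n.+1) => //= x s ->. Qed.

Definition s6L : seq (seq int) :=
  [:: [:: 1; 1; 2; 2; 2; 2; 3; 3];
      [:: 1; 1; 2; 2; 2; 2; -3; -3];
      [:: 2; 2; 4; -2; -2; -2; 0; 0];
      [:: 2; 2; -2; 4; -2; -2; 0; 0];
      [:: 2; 2; -2; -2; -2; 4; 0; 0];
      [:: 2; 2; -2; -2; 4; -2; 0; 0];
      [:: 3; -3; 0; 0; 0; 0; 3; -3];
      [:: 3; -3; 0; 0; 0; 0; -3; 3]].

Definition sq (i j : nat) : rat := (nth 0 (nth [::] s6L i) j)%:~R / 6%:R.

Lemma SmatE (i j : 'I_8) : Smat i j = ratr (sq i j).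
Proof. by rewrite /Smat mxE /S6 /mxl mxE /sq fmorph_div rmorph_int rmorph_nat. Qed.

Lemma conj_ratr (q : rat) : ((ratr q : algC)^*)%C = ratr q.
Proof. exact: conj_Crat (Crat_rat q). Qed.

Definition qsum (s : seq rat) := foldr +%R 0 s.

Definition qfus (l m v : nat) : rat :=
  qsum [seq sq l r * sq m r * sq v r / sq 0 r | r <- iota 0 8].

Lemma foldr_in (V : nmodType) (F G : nat -> V) s : {in s, F =1 G} ->
  foldr (fun k acc => F k + acc) 0 s = foldr +%R 0 [seq G k | k <- s].
Proof.
elim: s => //= x s IH H; rewrite H ?mem_head // IH // => y Hy; apply: H.
by rewrite inE Hy orbT.
Qed.

Lemma qfus_ok : lall (fun l => lall (fun m => lall (fun v =>
   qfus l m v == (nfus l m v)%:R) (iota 0 8)) (iota 0 8)) (iota 0 8).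
Proof. by vm_compute. Qed.

Lemma qr4 (a b c d : rat) : (ratr (a * b * c / d) : algC) = ratr a * ratr b * ratr c / ratr d.
Proof. by rewrite !rmorphM fmorphV. Qed.

Lemma fusionE (l m v : 'I_8) : fusion l m v = (nfus l m v)%:R.
Proof.
rewrite /fusion (eq_bigr (fun r : 'I_8 => (ratr (sq l r * sq m r * sq v r / sq 0 r) : algC))); last first.
  by move=> r _; rewrite qr4 !SmatE conj_ratr.
rewrite -rmorph_sum sum_ordE.
rewrite (foldr_in (G := fun r => sq l r * sq m r * sq v r / sq 0 r)); last first.
  by move=> k; rewrite mem_iota /= => Hk; rewrite inordK.
have := qfus_ok; rewrite lall_all => /allP /(_ l); rewrite mem_iota ltn_ord => /(_ isT).
rewrite lall_all => /allP /(_ m); rewrite mem_iota ltn_ord => /(_ isT).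
rewrite lall_all => /allP /(_ v); rewrite mem_iota ltn_ord => /(_ isT) /eqP.
by rewrite /qfus /qsum => ->; rewrite rmorph_nat.
Qed.
End Alg.

Section Glue.
Local Open Scope ring_scope.

Lemma inord_eqn n (i j : nat) : (i < n.+1)%N -> (j < n.+1)%N -> (@inord n i == inord j) = (i == j).
Proof. by move=> Hi Hj; rewrite -(inj_eq val_inj) /= !inordK. Qed.

Lemma nim0 (G : 'I_8 -> 'M[nat]_6) : is_nimrep G ->
  forall i j, (i < 6)%N -> (j < 6)%N -> G (inord 0) (inord i) (inord j) = (i == j).
Proof.
case=> H0 _ _ i j Hi Hj.
have -> : (inord 0 : 'I_8) = ord0 by apply/val_inj; rewrite /= inordK.
by rewrite H0 mxE inord_eqn //; case: (i == j).
Qed.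

Lemma nimsym n (G : 'I_8 -> 'M[nat]_n) : is_nimrep G -> forall l i j, G l i j = G l j i.
Proof. by case=> _ Hs _ l i j; have E := Hs l; rewrite /conjp in E; rewrite {1}E mxE. Qed.

Lemma nimmul n (G : 'I_8 -> 'M[nat]_n) : is_nimrep G -> forall l m i j,
  \sum_k G l i k * G m k j = \sum_(v < 8) nfus l m v * G v i j.
Proof.
case=> _ _ Hm l m i j; have := congr1 (fun M : 'M[algC]_n => M i j) (Hm l m).
rewrite !mxE summxE (eq_bigr (fun v : 'I_8 => ((nfus l m v * G v i j)%N)%:R)); last first.
  by move=> v _; rewrite !mxE fusionE natrM.
by rewrite -natr_sum => /eqP; rewrite eqr_nat => /eqP.
Qed.

Lemma matches_tr zl n (G : 'I_8 -> 'M[nat]_n) : matches (mxl 0%N zl) G -> forall l : 'I_8,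
  ((\tr (G l))%:R : algC) = \sum_(mu < 8) (nth 0%N (nth [::] zl mu) mu)%:R * (Smat l mu / Smat ord0 mu).
Proof.
case=> _ _ [U [e [HU He HG]]] l.
have := congr1 mxtrace (HG l).
rewrite mxtrace_mulC mulmxA HU mul1mx mxtrace_diag.
have -> : \tr (natmx (G l)) = (\tr (G l))%:R.
  by rewrite /mxtrace natr_sum; apply: eq_bigr => i _; rewrite mxE.
move=> ->.
rewrite (eq_bigr (fun j => Smat l (e j) / Smat ord0 (e j))); last by move=> j _; rewrite mxE.
rewrite (partition_big e xpredT) //=; apply: eq_bigr => mu _.
rewrite (eq_bigr (fun _ => Smat l mu / Smat ord0 mu)); last by move=> i /eqP ->.
rewrite sumr_const mulr_natl; congr (_ *+ _).
have := He mu; rewrite /mxl mxE cardsE => <-.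
by apply: eq_card => i.
Qed.
End Glue.

Definition G0m (G0L : seq (seq (seq nat))) (l : 'I_8) : 'M[nat]_6 :=
  \matrix_(i < 6, j < 6) mget (nth [::] G0L l) i j.

Section Uniq.
Local Open Scope ring_scope.

Definition qtr (zl : seq (seq nat)) (l : nat) : rat :=
  qsum [seq (nth 0%N (nth [::] zl mu) mu)%:R * (sq l mu / sq 0 mu) | mu <- iota 0 8].
Definition trok zl (T : seq nat) := lall (fun l => qtr zl l == (nth 0%N T l)%:R) (iota 0 8).

Lemma qr2 (k : nat) (a b : rat) : (ratr (k%:R * (a / b)) : algC) = k%:R * (ratr a / ratr b).
Proof. by rewrite rmorphM rmorph_nat fmorph_div. Qed.

Lemma trace_val zl T : trok zl T -> forall l : 'I_8,
  \sum_(mu < 8) (nth 0%N (nth [::] zl mu) mu)%:R * (Smat l mu / Smat ord0 mu) = ((nth 0%N T l)%:R : algC).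
Proof.
move=> Hok l.
rewrite (eq_bigr (fun mu : 'I_8 => (ratr ((nth 0%N (nth [::] zl mu) mu)%:R * (sq l mu / sq 0 mu)) : algC))); last first.
  by move=> mu _; rewrite qr2 !SmatE.
rewrite -rmorph_sum sum_ordE.
rewrite (foldr_in (G := fun mu => (nth 0%N (nth [::] zl mu) mu)%:R * (sq l mu / sq 0 mu))); last first.
  by move=> k; rewrite mem_iota /= => Hk; rewrite inordK.
move: Hok; rewrite /trok lall_all => /allP /(_ l); rewrite mem_iota ltn_ord => /(_ isT) /eqP.
by rewrite /qtr /qsum => ->; rewrite rmorph_nat.
Qed.

Lemma perm_of_list p : p \in permutations (iota 0 6) ->
  exists s : 'S_6, forall i : 'I_6, nat_of_ord (s i) = nth 0%N p i.
Proof.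
rewrite mem_permutations => Hp.
have Hsz : size p = 6%N by rewrite (perm_size Hp) size_iota.
have Hu : uniq p by rewrite (perm_uniq Hp) iota_uniq.
have Hlt : forall i : 'I_6, (nth 0%N p i < 6)%N.
  move=> i; have : nth 0%N p i \in p by rewrite mem_nth // Hsz.
  by rewrite (perm_mem Hp) mem_iota.
pose g (i : 'I_6) : 'I_6 := inord (nth 0%N p i).
have ginj : injective g.
  move=> i j /(congr1 (@nat_of_ord 6)); rewrite /g !inordK // => /eqP.
  by rewrite nth_uniq ?Hsz // => /eqP /val_inj.
exists (perm ginj) => i; by rewrite permE /g inordK.
Qed.

Lemma conjmx_entry n (t : 'S_n) (M : 'M[nat]_n) i j :
  (perm_mx t *m M *m (perm_mx t)^T) i j = M (t i) (t j).
Proof. by rewrite tr_perm_mx -col_permE -row_permE !mxE. Qed.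

Lemma uniq_gen zl T G0L : search T G0L -> size G0L = 8%N -> nth 0%N T 6 = 0%N -> trok zl T ->
  forall G : 'I_8 -> 'M[nat]_6, matches (mxl 0%N zl) G ->
  exists s : 'S_6, forall l i j, G l i j = G0m G0L l (s i) (s j).
Proof.
move=> Hs Hsz HT6 Hok G HG.
have Hn : is_nimrep G by case: HG.
pose f l i j := G (inord l) (inord i) (inord j).
have := classify Hs Hsz HT6 (f := f).
case.
- exact: nim0.
- by move=> l i j _ _ _; rewrite /f nimsym.
- move=> l m i j Hl Hm Hi Hj.
  have := nimmul Hn (inord l) (inord m) (inord i) (inord j).
  rewrite sum_ordN sum_ordN => ->.
  by apply: sumn_ext => v Hv; rewrite !inordK.
- move=> l Hl.
  have := matches_tr HG (inord l); rewrite (trace_val Hok) => /eqP; rewrite eqr_nat => /eqP; rewrite inordK // => <-.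
  by rewrite /mxtrace sum_ordN.
move=> p Hp Hf.
have [s Hs'] := perm_of_list Hp.
exists s => l i j.
have := Hf l i j (ltn_ord l) (ltn_ord i) (ltn_ord j).
by rewrite /f !inord_val => ->; rewrite /G0m mxE !Hs'.
Qed.

End Uniq.

Section Exist.
Local Open Scope ring_scope.

Definition Wq (W : seq (seq int)) (i j : nat) : rat := (nth 0 (nth [::] W i) j)%:~R.
Definition Umx W (nrm : seq nat) : 'M[algC]_6 :=
  \matrix_(i, j) (ratr (Wq W i j) / sqrtC (nth 0%N nrm i)%:R).
Definition emap (eL : seq nat) (i : 'I_6) : 'I_8 := inord (nth 0%N eL i).

Definition ck_id G0L := nth [::] G0L 0 == idL.
Definition ck_sym G0L := lall (fun l => lall (fun i => lall (fun j =>
  mget (nth [::] G0L l) i j == mget (nth [::] G0L l) j i) (iota 0 6)) (iota 0 6)) (iota 0 8).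
Definition ck_mul G0L := lall (fun l => lall (fun m => lmul (nth [::] G0L l) (nth [::] G0L m) ==
  mkL (fun i j => sumn [seq (nfus l m v * mget (nth [::] G0L v) i j)%N | v <- iota 0 8])) (iota 0 8)) (iota 0 8).
Definition ck_W W (nrm : seq nat) := lall (fun i => lall (fun k =>
  qsum [seq Wq W i j * Wq W k j | j <- iota 0 6] == (if i == k then (nth 0%N nrm i)%:R else 0))
  (iota 0 6)) (iota 0 6).
Definition ck_n (nrm : seq nat) := lall (fun i => (0 < nth 0 nrm i)%N) (iota 0 6).
Definition ck_e (eL : seq nat) (zl : seq (seq nat)) :=
  lall (fun i => (nth 0 eL i < 8)%N) (iota 0 6) &&
  lall (fun mu => sumn [seq nat_of_bool (nth 0%N eL k == mu) | k <- iota 0 6] == nth 0%N (nth [::] zl mu) mu) (iota 0 8).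
Definition ck_dec G0L W (nrm eL : seq nat) := lall (fun l => lall (fun j => lall (fun k =>
  qsum [seq Wq W i j * Wq W i k * (sq l (nth 0%N eL i) / sq 0 (nth 0%N eL i)) / (nth 0%N nrm i)%:R | i <- iota 0 6]
   == (mget (nth [::] G0L l) j k)%:R) (iota 0 6)) (iota 0 6)) (iota 0 8).
Definition ck_tr (zl : seq (seq nat)) := sumn [seq nth 0%N (nth [::] zl k) k | k <- iota 0 8] == 6%N.

Lemma lall3 (P : nat -> nat -> nat -> bool) a b c :
  lall (fun x => lall (fun y => lall (fun z => P x y z) (iota 0 c)) (iota 0 b)) (iota 0 a) ->
  forall x y z, (x < a)%N -> (y < b)%N -> (z < c)%N -> P x y z.
Proof.
rewrite lall_all => /allP H x y z Hx Hy Hz.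
move: (H x); rewrite mem_iota Hx => /(_ isT); rewrite lall_all => /allP /(_ y).
rewrite mem_iota Hy => /(_ isT); rewrite lall_all => /allP /(_ z).
by rewrite mem_iota Hz => /(_ isT).
Qed.

Lemma lall2' (P : nat -> nat -> bool) a b :
  lall (fun x => lall (fun y => P x y) (iota 0 b)) (iota 0 a) ->
  forall x y, (x < a)%N -> (y < b)%N -> P x y.
Proof.
rewrite lall_all => /allP H x y Hx Hy.
move: (H x); rewrite mem_iota Hx => /(_ isT); rewrite lall_all => /allP /(_ y).
by rewrite mem_iota Hy => /(_ isT).
Qed.

Lemma lall1 (P : nat -> bool) a : lall P (iota 0 a) -> forall x, (x < a)%N -> P x.
Proof. by rewrite lall_all => /allP H x Hx; apply: H; rewrite mem_iota. Qed.

Lemma conj_q (q : rat) (m : nat) : ((ratr q : algC) / sqrtC m%:R)^* = ratr q / sqrtC m%:R.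
Proof.
apply: conj_Creal; rewrite rpred_div //; last by apply: sqrtC_real; rewrite ler0n.
by apply: Creal_Crat; apply: Crat_rat.
Qed.

Lemma sqrt_sq (m : nat) : sqrtC (m%:R : algC) * sqrtC m%:R = m%:R.
Proof. by rewrite -expr2 sqrtCK. Qed.

Lemma sqrt_neq0 (m : nat) : (0 < m)%N -> sqrtC (m%:R : algC) != 0.
Proof. by move=> Hm; rewrite sqrtC_eq0 pnatr_eq0 -lt0n. Qed.

Lemma term2 (a b : rat) (m m' : nat) :
  (ratr a : algC) / sqrtC m%:R * (ratr b / sqrtC m'%:R) = ratr (a * b) / (sqrtC m%:R * sqrtC m'%:R).
Proof. by rewrite rmorphM invfM mulrACA. Qed.

Lemma term3 (a b c : rat) (m : nat) : (0 < m)%N ->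
  (ratr a : algC) / sqrtC m%:R * ratr c * (ratr b / sqrtC m%:R) = ratr (a * b * c / m%:R).
Proof.
move=> Hm; have Hs := sqrt_neq0 Hm.
transitivity ((ratr a : algC) * ratr b * ratr c / (sqrtC m%:R * sqrtC m%:R)).
  by move: Hs; set s := sqrtC _ => Hs; field.
by rewrite sqrt_sq !rmorphM fmorphV rmorph_nat.
Qed.

End Exist.

Section Exist2.
Local Open Scope ring_scope.

Lemma sum_ordNat n (F : 'I_n.+1 -> nat) :
  (\sum_(k < n.+1) F k)%N = sumn [seq F (inord k) | k <- iota 0 n.+1].
Proof.
rewrite (eq_bigr (fun k : 'I_n.+1 => F (inord k))) => [|k _]; last by rewrite inord_val.
rewrite -(big_mkord xpredT (fun k => F (inord k))) /index_iota subn0.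
by elim: (iota 0 n.+1) => [|x s IH]; rewrite ?big_nil ?big_cons ?IH.
Qed.

Lemma card_emap eL (mu : 'I_8) : (forall i, (i < 6)%N -> (nth 0 eL i < 8)%N) ->
  #|[set i : 'I_6 | emap eL i == mu]| = sumn [seq nat_of_bool (nth 0%N eL k == mu) | k <- iota 0 6].
Proof.
move=> He; rewrite cardsE -sum1_card big_mkcond sum_ordNat.
apply: sumn_ext => k Hk; rewrite unfold_in /emap /=.
have E1 : nat_of_ord (inord k : 'I_6) = k by rewrite inordK.
rewrite E1 inordK ?He //; by case: eqP.
Qed.

Lemma SmatM : Smat = \matrix_(i, j) (ratr (sq i j) : algC).
Proof. by apply/matrixP => i j; rewrite SmatE mxE. Qed.

Lemma UUt W nrm : ck_W W nrm -> ck_n nrm -> Umx W nrm *m ctrans (Umx W nrm) = 1%:M.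
Proof.
move=> HW Hn; apply/matrixP => i k; rewrite !mxE.
rewrite (eq_bigr (fun j : 'I_6 => (ratr (Wq W i j * Wq W k j) : algC) /
     (sqrtC (nth 0%N nrm i)%:R * sqrtC (nth 0%N nrm k)%:R))); last first.
  by move=> j _; rewrite !mxE conj_q term2.
rewrite -mulr_suml -rmorph_sum sum_ordE.
rewrite (foldr_in (G := fun j => Wq W i j * Wq W k j)); last first.
  by move=> x; rewrite mem_iota /= => Hx; rewrite inordK.
have := eqP (lall2' HW (ltn_ord i) (ltn_ord k)); rewrite /qsum => ->.
have Hni := lall1 Hn (ltn_ord i).
case: (eqVneq i k) => [<-|Hik].
  rewrite eqxx /= rmorph_nat sqrt_sq divff //.
  by rewrite pnatr_eq0 -lt0n.
have -> : (nat_of_ord i == nat_of_ord k) = false by apply/negbTE.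
by rewrite rmorph0 mul0r.
Qed.

Lemma exist_gen zl G0L W nrm eL :
  ck_tr zl -> ck_id G0L -> ck_sym G0L -> ck_mul G0L -> ck_W W nrm -> ck_n nrm ->
  ck_e eL zl -> ck_dec G0L W nrm eL ->
  matches (mxl 0%N zl) (G0m G0L).
Proof.
move=> Htr Hid Hsym Hmul HW Hn /andP[He1 He2] Hdec.
split.
- rewrite /mxtrace sum_ordNat (sumn_ext (h := fun k => nth 0%N (nth [::] zl k) k)).
    by rewrite (eqP Htr).
  by move=> k Hk; rewrite /mxl mxE !inordK.
- split.
  + apply/matrixP => i j; rewrite /G0m !mxE (eqP Hid) mget_mkL //.
    have -> : (nat_of_ord i == nat_of_ord j) = (i == j) by [].
    by case: (i == j).
  + move=> l; apply/matrixP => i j; rewrite /conjp !mxE.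
    exact: (eqP (lall3 Hsym (ltn_ord l) (ltn_ord i) (ltn_ord j))).
  + move=> l m; apply/matrixP => i j; rewrite !mxE summxE.
    rewrite (eq_bigr (fun v : 'I_8 => ((nfus l m v * G0m G0L v i j)%N)%:R)); last first.
      by move=> v _; rewrite !mxE fusionE natrM.
    rewrite -natr_sum; congr (_%:R).
    rewrite !sum_ordN.
    have E := eqP (lall2' Hmul (ltn_ord l) (ltn_ord m)).
    have := congr1 (fun M => mget M i j) E; rewrite /lmul !mget_mkL // => HE.
    rewrite (sumn_ext (h := fun k => mget (nth [::] G0L l) i k * mget (nth [::] G0L m) k j)); last first.
      by move=> k Hk; rewrite !mxE !inordK.
    rewrite HE; apply: sumn_ext => v Hv; by rewrite !mxE !inordK.
- exists (Umx W nrm), (emap eL); split.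
  + exact: UUt.
  + move=> mu; rewrite card_emap; last exact: lall1 He1.
    by rewrite /mxl mxE; apply/eqP; apply: (lall1 He2 (ltn_ord mu)).
  + move=> l; apply/matrixP => j k; rewrite mul_mx_diag !mxE.
    rewrite (eq_bigr (fun i : 'I_6 => (ratr (Wq W i j * Wq W i k *
        (sq l (nth 0%N eL i) / sq 0 (nth 0%N eL i)) / (nth 0%N nrm i)%:R) : algC))); last first.
      move=> i _; rewrite SmatM !mxE conj_q /emap inordK; last exact: (lall1 He1 (ltn_ord i)).
      by rewrite -fmorph_div term3 //; apply: (lall1 Hn (ltn_ord i)).
    rewrite -rmorph_sum sum_ordE.
    rewrite (foldr_in (G := fun i => Wq W i j * Wq W i k *
        (sq l (nth 0%N eL i) / sq 0 (nth 0%N eL i)) / (nth 0%N nrm i)%:R)); last first.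
      by move=> x; rewrite mem_iota /= => Hx; rewrite inordK.
    have := eqP (lall3 Hdec (ltn_ord l) (ltn_ord j) (ltn_ord k)); rewrite /qsum => ->.
    by rewrite rmorph_nat.
Qed.
End Exist2.

Section Main.
Local Open Scope ring_scope.

Lemma trZ zl : ck_tr zl -> \tr (mxl 0%N zl) = 6%N.
Proof.
move=> Htr; rewrite /mxtrace sum_ordNat (sumn_ext (h := fun k => nth 0%N (nth [::] zl k) k)).
  by rewrite (eqP Htr).
by move=> k Hk; rewrite /mxl mxE !inordK.
Qed.

Lemma main_gen Z zl G0L W nrm eL T : Z = mxl 0%N zl ->
  ck_tr zl -> ck_id G0L -> ck_sym G0L -> ck_mul G0L -> ck_W W nrm -> ck_n nrm ->
  ck_e eL zl -> ck_dec G0L W nrm eL ->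
  search T G0L -> size G0L = 8%N -> nth 0%N T 6 = 0%N -> trok zl T ->
  (exists n (G : 'I_8 -> 'M[nat]_n), matches Z G) /\
  (forall n (G1 G2 : 'I_8 -> 'M[nat]_n), matches Z G1 -> matches Z G2 -> nimrep_equiv G1 G2).
Proof.
move=> -> Htr Hid Hsym Hmul HW Hn He Hdec Hs Hsz HT6 Hok; split.
  by exists 6%N, (G0m G0L); exact: (exist_gen Htr Hid Hsym Hmul HW Hn He Hdec).
move=> n G1 G2 H1 H2.
have Hn6 : n = 6%N by move: H1 => [Hn6 _ _]; rewrite Hn6 trZ.
subst n.
have [s1 E1] := uniq_gen Hs Hsz HT6 Hok H1.
have [s2 E2] := uniq_gen Hs Hsz HT6 Hok H2.
exists (s2 * s1^-1)%g => l; apply/matrixP => i j.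
by rewrite conjmx_entry E1 E2 !permM !permKV.
Qed.
End Main.

Theorem proposition6p7 :
  forall Z : 'M[nat]_8, Z \in [:: Zp22; Z2; Z4; Z7; Z22; Z33; Zp33] ->
    (exists n (G : 'I_8 -> 'M[nat]_n), matches Z G) /\
    (forall n (G1 G2 : 'I_8 -> 'M[nat]_n),
        matches Z G1 -> matches Z G2 -> nimrep_equiv G1 G2).
Proof.
move=> Z; rewrite !inE.
case/orP => [/eqP->|]; first by apply: (@main_gen _ zl_p22 G_p22 W_p22 n_p22 e_p22 T_p22); vm_compute.
case/orP => [/eqP->|]; first by apply: (@main_gen _ zl_z2 G_z2 W_z2 n_z2 e_z2 T_z2); vm_compute.
case/orP => [/eqP->|]; first by apply: (@main_gen _ zl_z4 G_z4 W_z4 n_z4 e_z4 T_z4); vm_compute.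
case/orP => [/eqP->|]; first by apply: (@main_gen _ zl_z7 G_z7 W_z7 n_z7 e_z7 T_z7); vm_compute.
case/orP => [/eqP->|]; first by apply: (@main_gen _ zl_z22 G_z22 W_z22 n_z22 e_z22 T_z22); vm_compute.
case/orP => [/eqP->|]; first by apply: (@main_gen _ zl_z33 G_z33 W_z33 n_z33 e_z33 T_z33); vm_compute.
move/eqP->; by apply: (@main_gen _ zl_p33 G_p33 W_p33 n_p33 e_p33 T_p33); vm_compute.
Qed.
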